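(* Let $h(n)$ be defined by $h(0)=h(1)=h(2)=h(3)=1$, $h(4)=3$ and $h(n)=h(n-2)+2h(n-3)+2h(n-4)$ for $n\ge5$ (so that, for $n\ge3$, $h(n)$ is the number of saturated stem-loop structures on $[1,n]$). Then for $n\ge1$, $h(n)=[z^n]\dfrac{z}{1-z-2z^3}$, and as $n\to\infty$, $$h(n)\sim \frac{1}{1+6a^2}\,a^{-n}\approx 0.323954\cdot 1.69562^n,$$ where $a\approx 0.5897545$ is the unique real root of $1-z-2z^3$.
   Context: A secondary structure on $[1,n]$ (with $\theta=1$) is a set of pairs $(i,j)$, $1\le i<j\le n$, with no crossing pairs ($i<k<j<\ell$), each position in at most one pair, and $j-i>1$ for each pair. It is saturated if no further pair can be added while remaining a secondary structure. A stem-loop is a secondary structure $S$ having a unique pair $(i_0,j_0)\in S$ such that every other $(i,j)\in S$ satisfies $i<i_0<j_0<j$. *)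

(* Defs.v *)
From Stdlib Require Import Reals.
Open Scope R_scope.

Fixpoint h (n : nat) : nat :=
  match n with
  | S (S ((S ((S ((S m) as k1)) as k2)) as k3)) =>
      (h k3 + 2 * h k2 + 2 * h k1)%nat
  | 4%nat => 3%nat
  | _ => 1%nat
  end.

Definition ps_mul (f g : nat -> R) : nat -> R :=
  fun n => sum_f_R0 (fun k => f k * g (n - k)%nat) n.

Definition den_poly (n : nat) : R :=
  match n with
  | 0%nat => 1
  | 1%nat => -1
  | 3%nat => -2
  | _ => 0
  end.

Definition num_poly (n : nat) : R :=
  match n with
  | 1%nat => 1
  | _ => 0
  end.

(* G is the power series expansion of z / (1 - z - 2 z^3), i.e. the
   (unique) formal power series with (1 - z - 2 z^3) * G = z. *)
Definition is_series_of_quot (G : nat -> R) : Prop :=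
  forall n, ps_mul den_poly G n = num_poly n.

(* Main.v *)
Require Import Defs.
From Stdlib Require Import Reals Lra Psatz Lia.
Open Scope R_scope.

Lemma root_bounds a : 1 - a - 2 * a ^ 3 = 0 ->
  58975451/100000000 < a < 58975452/100000000.
Proof.
  intros H. split.
  - destruct (Rlt_or_le (58975451/100000000) a) as [h|h]; auto.
    exfalso. set (l := 58975451/100000000) in *.
    assert (a^2 + a*l + l^2 >= 0) by nra.
    assert (1 - l - 2*l^3 > 0) by (unfold l; lra).
    assert (1 - a - 2*a^3 - (1 - l - 2*l^3) = (l - a)*(1 + 2*(a^2+a*l+l^2))) by ring.
    nra.
  - destruct (Rlt_or_le a (58975452/100000000)) as [h|h]; auto.
    exfalso. set (l := 58975452/100000000) in *.
    assert (a^2 + a*l + l^2 >= 0) by nra.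
    assert (1 - l - 2*l^3 < 0) by (unfold l; lra).
    assert (1 - a - 2*a^3 - (1 - l - 2*l^3) = (l - a)*(1 + 2*(a^2+a*l+l^2))) by ring.
    nra.
Qed.

Lemma numerics a : 1 - a - 2 * a ^ 3 = 0 ->
     Rabs (a - 5897545 / 10000000) < 1 / 10000000 /\
     Rabs (1 / (1 + 6 * a ^ 2) - 323954 / 1000000) < 1 / 1000000 /\
     Rabs (/ a - 169562 / 100000) < 1 / 1000000.
Proof.
  intros H. destruct (root_bounds a H) as [h1 h2].
  assert (HD : 0 < 1 + 6*a^2) by nra.
  assert (Hc : 1 / (1 + 6*a^2) * (1 + 6*a^2) = 1) by (field; lra).
  assert (Hi : / a * a = 1) by (field; lra).
  set (c := 1 / (1 + 6*a^2)) in *. set (D := 1 + 6*a^2) in *.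
  assert (1 < (323954 / 1000000 + 1/1000000) * D) by (unfold D; nra).
  assert ((323954 / 1000000 - 1/1000000) * D < 1) by (unfold D; nra).
  set (b := / a) in *.
  split; [|split]; apply Rabs_def1.
  - lra.
  - lra.
  - nra.
  - nra.
  - nra.
  - nra.
Qed.

Lemma h_rec n : h (S (S (S (S n)))) = (h (S (S (S n))) + 2 * h (S n))%nat.
Proof.
  induction n as [|n IH]; [reflexivity|].
  change (h (S (S (S (S (S n)))))) with (h (S (S (S n))) + 2 * h (S (S n)) + 2 * h (S n))%nat.
  rewrite IH. lia.
Qed.

Definition Gd (n : nat) : R := match n with O => 0 | _ => INR (h n) end.

Lemma Gd_rec n : Gd (S (S (S n))) = Gd (S (S n)) + 2 * Gd n.
Proof.
  destruct n as [|n]; [simpl; lra|].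
  unfold Gd. rewrite h_rec, plus_INR, mult_INR. simpl (INR 2). ring.
Qed.

Lemma sum_trunc (f : nat -> R) j : (forall k, (4 <= k)%nat -> f k = 0) ->
  sum_f_R0 f (3 + j) = sum_f_R0 f 3.
Proof.
  intros Hf; induction j as [|j IH]; [reflexivity|].
  replace (3 + S j)%nat with (S (3 + j)) by lia.
  change (sum_f_R0 f (S (3+j))) with (sum_f_R0 f (3+j) + f (S (3+j))).
  rewrite IH, (Hf (S (3+j))) by lia. ring.
Qed.

Lemma conv_big F j : ps_mul den_poly F (3 + j) = F (3 + j)%nat - F (2 + j)%nat - 2 * F j.
Proof.
  unfold ps_mul. rewrite sum_trunc.
  - simpl sum_f_R0. unfold den_poly.
    rewrite Nat.sub_0_r. simpl. ring.
  - intros k Hk. unfold den_poly.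
    destruct k as [|[|[|[|k]]]]; try lia. simpl. ring.
Qed.

Lemma series_exists : is_series_of_quot Gd.
Proof.
  intros n. destruct n as [|[|[|n]]].
  - unfold ps_mul; simpl. lra.
  - unfold ps_mul; simpl. lra.
  - unfold ps_mul; simpl. lra.
  - replace (S (S (S n))) with (3 + n)%nat by lia. rewrite conv_big.
    replace (3+n)%nat with (S (S (S n))) by lia.
    replace (2+n)%nat with (S (S n)) by lia.
    rewrite Gd_rec. simpl. ring.
Qed.

Lemma series_unique G : is_series_of_quot G -> forall n, G n = Gd n.
Proof.
  intros HG.
  assert (H0 := HG 0%nat). assert (H1 := HG 1%nat). assert (H2 := HG 2%nat).
  unfold ps_mul in H0, H1, H2; simpl in H0, H1, H2.
  assert (forall n, G n = Gd n /\ G (S n) = Gd (S n) /\ G (S (S n)) = Gd (S (S n))).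
  { induction n as [|n [IH1 [IH2 IH3]]].
    - simpl. lra.
    - split; [auto|split; [auto|]].
      assert (E := HG (3 + n)%nat). rewrite conv_big in E.
      replace (3+n)%nat with (S (S (S n))) in * by lia.
      replace (2+n)%nat with (S (S n)) in * by lia.
      simpl num_poly in E. rewrite Gd_rec. lra. }
  intros n; apply H.
Qed.

Lemma h_eq G : is_series_of_quot G -> forall n, (1 <= n)%nat -> INR (h n) = G n.
Proof.
  intros HG n Hn. rewrite (series_unique G HG). destruct n; [lia|reflexivity].
Qed.

Definition cc (a : R) := 1 / (1 + 6 * a ^ 2).
Definition dd (a : R) (n : nat) := INR (h (S n)) * a ^ (S n) - cc a.
Definition VV (a : R) n := dd a (S n) ^ 2 + (1 - a) * dd a (S n) * dd a n + 2 * a^3 * dd a n ^ 2.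

Lemma Sinv (a : R) (Ha : 1 - a - 2 * a ^ 3 = 0) (Hapos : 0 < a) n : INR (h (S (S (S n)))) * a ^ (S (S (S n))) + (1-a) * INR (h (S (S n))) * a ^ (S (S n))
   + 2 * a^3 * INR (h (S n)) * a ^ (S n) = a.
Proof.
  induction n as [|n IH].
  - simpl. nra.
  - rewrite h_rec, plus_INR, mult_INR. simpl (INR 2).
    set (x := INR (h (S n))) in *. set (y := INR (h (S (S n)))) in *.
    set (z := INR (h (S (S (S n))))) in *.
    transitivity (z*a^S(S(S n)) + (1-a)*y*a^S(S n) + 2*a^3*x*a^S n - (a*a^n)*y*a*(1-a-2*a^3)).
    + simpl. ring.
    + rewrite Ha. lra.
Qed.

Lemma d_rec (a : R) (Ha : 1 - a - 2 * a ^ 3 = 0) (Hapos : 0 < a) n : dd a (S (S n)) + (1 - a) * dd a (S n) + 2 * a^3 * dd a n = 0.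
Proof.
  unfold dd. assert (E := (Sinv a Ha Hapos) n).
  assert (Hc : (cc a) * (1 + 6*a^2) = 1) by (unfold cc; field; nra).
  nra.
Qed.


Lemma V_rec (a : R) (Ha : 1 - a - 2 * a ^ 3 = 0) (Hapos : 0 < a) n : VV a (S n) = 2 * a^3 * VV a n.
Proof.
  unfold VV. assert (E := (d_rec a Ha Hapos) n).
  replace (dd a (S (S n))) with (- (1 - a) * dd a (S n) - 2 * a^3 * dd a n) by lra.
  ring.
Qed.

Lemma V_pow (a : R) (Ha : 1 - a - 2 * a ^ 3 = 0) (Hapos : 0 < a) n : VV a n = VV a 0 * (2 * a^3) ^ n.
Proof.
  induction n as [|n IH]; [simpl; ring|]. rewrite (V_rec a Ha Hapos), IH. simpl. ring.
Qed.

Lemma a_bounds (a : R) (Ha : 1 - a - 2 * a ^ 3 = 0) (Hapos : 0 < a) : 1/2 < a < 6/10.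
Proof.
  split.
  - destruct (Rlt_or_le (1/2) a) as [h1|h1]; auto. exfalso.
    assert (a*a <= 1/4) by nra. assert (a*a*a <= 1/8) by nra.
    assert (a^3 = a*a*a) by ring. lra.
  - destruct (Rlt_or_le a (6/10)) as [h1|h1]; auto. exfalso.
    assert (a*a >= 36/100) by nra. assert (a*a*a >= 216/1000) by nra.
    assert (a^3 = a*a*a) by ring. lra.
Qed.

Lemma V_lower (a : R) (Ha : 1 - a - 2 * a ^ 3 = 0) (Hapos : 0 < a) n : (2*a^3 - (1-a)^2/4) * dd a n ^ 2 <= VV a n.
Proof.
  unfold VV. assert (0 <= (dd a (S n) + (1-a)/2 * dd a n)^2) by (apply pow2_ge_0).
  assert (E : dd a (S n) ^ 2 + (1 - a) * dd a (S n) * dd a n + 2 * a ^ 3 * dd a n ^ 2 =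
     (dd a (S n) + (1-a)/2 * dd a n)^2 + (2*a^3 - (1-a)^2/4) * dd a n ^ 2) by field.
  lra.
Qed.

Lemma d_small (a : R) (Ha : 1 - a - 2 * a ^ 3 = 0) (Hapos : 0 < a) eps : 0 < eps -> exists N, forall m, (m >= N)%nat -> dd a m ^ 2 < eps.
Proof.
  intros He. destruct (a_bounds a Ha Hapos) as [A1 A2].
  set (k := 2*a^3 - (1-a)^2/4).
  assert (Hk : 0 < k) by (unfold k; nra).
  assert (Hx : Rabs (2*a^3) < 1) by (rewrite Rabs_pos_eq; nra).
  assert (Hy : 0 < k * eps / (Rabs (VV a 0) + 1)).
  { apply Rdiv_lt_0_compat; [nra| pose proof (Rabs_pos (VV a 0)); lra]. }
  destruct (pow_lt_1_zero _ Hx _ Hy) as [N HN].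
  exists N. intros m Hm. specialize (HN m Hm).
  assert (L := (V_lower a Ha Hapos) m). rewrite (V_pow a Ha Hapos) in L.
  assert (Q : Rabs (VV a 0 * (2*a^3)^m) < k * eps).
  { rewrite Rabs_mult.
    assert (0 <= Rabs ((2*a^3)^m)) by apply Rabs_pos.
    assert (P : Rabs ((2 * a ^ 3) ^ m) * (Rabs (VV a 0) + 1) < k * eps).
    { apply (Rmult_lt_compat_r (Rabs (VV a 0) + 1)) in HN; [|pose proof (Rabs_pos (VV a 0)); lra].
      unfold Rdiv in HN. rewrite Rmult_assoc, Rinv_l in HN; [lra|pose proof (Rabs_pos (VV a 0)); lra]. }
    nra. }
  assert (R1 := Rle_abs (VV a 0 * (2*a^3)^m)).
  fold k in L.
  apply (Rmult_lt_reg_l k); lra.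
Qed.

Lemma asym (a : R) (Ha : 1 - a - 2 * a ^ 3 = 0) (Hapos : 0 < a) : Un_cv (fun n => INR (h n) / ((1 / (1 + 6 * a ^ 2)) * / a ^ n)) 1.
Proof.
  fold (cc a). intros eps He.
  assert (Hc : 0 < (cc a)) by (unfold cc; apply Rdiv_lt_0_compat; [lra| pose proof (pow2_ge_0 a); lra]).
  destruct ((d_small a Ha Hapos) ((eps * (cc a))^2)) as [N HN]; [apply pow_lt; nra|].
  exists (S N). intros n Hn. destruct n as [|m]; [lia|].
  assert (Hm : (m >= N)%nat) by lia. specialize (HN m Hm).
  unfold R_dist.
  assert (Ap : 0 < a ^ S m) by (apply pow_lt; lra).
  replace (INR (h (S m)) / ((cc a) * / a ^ S m) - 1) with (dd a m / (cc a)).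
  2:{ unfold dd. field. split; lra. }
  unfold Rdiv. rewrite Rabs_mult, Rabs_inv, (Rabs_pos_eq (cc a)) by lra.
  apply (Rmult_lt_reg_r (cc a)); [lra|]. rewrite Rmult_assoc, Rinv_l by lra.
  destruct (Rlt_or_le (Rabs (dd a m)) (eps * (cc a))) as [X|X]; [lra|].
  exfalso. assert (dd a m ^ 2 = Rabs (dd a m) ^ 2).
  { destruct (Rle_or_lt 0 (dd a m)); [rewrite Rabs_pos_eq|rewrite Rabs_left]; try lra; ring. }
  assert ((eps*(cc a))^2 <= Rabs (dd a m)^2) by (apply pow_incr; split; nra). lra.
Qed.

Lemma root_pos a : 1 - a - 2 * a ^ 3 = 0 -> 0 < a.
Proof.
  intros H. destruct (Rlt_or_le 0 a) as [h1|h1]; auto. exfalso.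
  assert (a*a >= 0) by nra. assert (a*a*a <= 0) by nra.
  assert (a^3 = a*a*a) by ring. lra.
Qed.

Lemma root_ex : exists! a : R, 1 - a - 2 * a ^ 3 = 0.
Proof.
  assert (Hc : continuity (fun x => x + 2 * x ^ 3 - 1)).
  { apply continuity_minus; [|apply continuity_const; intros ?; auto].
    apply continuity_plus; [apply derivable_continuous, derivable_id|].
    apply continuity_scal. apply derivable_continuous, derivable_pow. }
  destruct (IVT _ 0 1 Hc) as [z [Hz1 Hz2]]; try (simpl; lra).
  exists z. split; [lra|].
  intros y Hy.
  assert (E : (1 - z - 2*z^3) - (1 - y - 2*y^3) = (y - z)*(1 + 2*(z^2+z*y+y^2))) by ring.
  assert (z^2+z*y+y^2 >= 0) by nra.
  assert (0 < 1 + 2*(z^2+z*y+y^2)) by lra.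
  assert ((y - z) * (1 + 2*(z^2+z*y+y^2)) = 0) by lra.
  apply Rmult_integral in H1. lra.
Qed.

Theorem mainTheorem8 :
  (exists G : nat -> R, is_series_of_quot G) /\
  (forall G : nat -> R, is_series_of_quot G ->
     forall n : nat, (1 <= n)%nat -> INR (h n) = G n) /\
  (exists! a : R, 1 - a - 2 * a ^ 3 = 0) /\
  (forall a : R, 1 - a - 2 * a ^ 3 = 0 ->
     Un_cv (fun n => INR (h n) / ((1 / (1 + 6 * a ^ 2)) * / a ^ n)) 1 /\
     Rabs (a - 5897545 / 10000000) < 1 / 10000000 /\
     Rabs (1 / (1 + 6 * a ^ 2) - 323954 / 1000000) < 1 / 1000000 /\
     Rabs (/ a - 169562 / 100000) < 1 / 1000000).
Proof.
  split; [exists Gd; apply series_exists|].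
  split; [exact h_eq|].
  split; [exact root_ex|].
  intros a Ha. split.
  - apply (asym a Ha (root_pos a Ha)).
  - apply numerics; auto.
Qed.
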